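(* A closed reversible reaction network $(X,\mathscr{R})$ with stoichiometric matrix $S$ is free of cornucopias and abysses if and only if there is no vector $v\in\mathbb{R}^{\mathscr{R}}$ such that $Sv>0$.
   Context: A reaction network (RN) $(X,\mathscr{R})$ consists of a finite non-empty set $X$ of species and a finite non-empty set $\mathscr{R}$ of reactions. Each reaction $r$ is given by stoichiometric coefficients $s^-_{xr},s^+_{xr}\in\mathbb{N}_0$. The stoichiometric matrix $S\in\mathbb{Z}^{X\times\mathscr{R}}$ has entries $S_{xr}=s^+_{xr}-s^-_{xr}$. The RN is closed if every reaction $r$ has $x,y$ with $S_{xr}<0<S_{yr}$. The reverse $\bar r$ of $r$ has $s^-_{x\bar r}=s^+_{xr}$ and $s^+_{x\bar r}=s^-_{xr}$. The RN is reversible if $r\in\mathscr{R}$ implies $\bar r\in\mathscr{R}$. For a real vector $w$, $w>0$ means $w$ is componentwise non-negative and nonzero, and $w<0$ means $-w>0$. A vector $v\in\mathbb{R}^{\mathscr{R}}$ with $v>0$ is a cornucopia if $Sv>0$ and an abyss if $Sv<0$. *)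

(* Defs.v *)
From mathcomp Require Import all_boot all_order all_algebra.
Set Implicit Arguments. Unset Strict Implicit. Unset Printing Implicit Defensive.
Import Order.TTheory GRing.Theory Num.Theory.
Local Open Scope ring_scope.

(* A reaction network with species X and reactions Rn (finite types), given by
   stoichiometric coefficients sm x r = s^-_{xr} and sp x r = s^+_{xr}. *)

Definition stoich {X Rn : finType} (sm sp : X -> Rn -> nat) {R : pzRingType}
  (x : X) (r : Rn) : R := (sp x r)%:R - (sm x r)%:R.

Definition stoich_apply {X Rn : finType} (sm sp : X -> Rn -> nat) {R : pzRingType}
  (v : Rn -> R) (x : X) : R := \sum_(r : Rn) stoich sm sp x r * v r.

Definition closed_RN {X Rn : finType} (sm sp : X -> Rn -> nat) : Prop :=
  forall r : Rn, exists x y : X,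
    (stoich sm sp x r < 0 :> int) /\ (0 < stoich sm sp y r :> int).

Definition reversible_RN {X Rn : finType} (sm sp : X -> Rn -> nat) : Prop :=
  forall r : Rn, exists rb : Rn, forall x : X, sm x rb = sp x r /\ sp x rb = sm x r.

(* w > 0 : componentwise nonnegative and nonzero *)
Definition vpos {I : Type} {R : numDomainType} (w : I -> R) : Prop :=
  (forall i, 0 <= w i) /\ exists i, w i != 0.

Definition vneg {I : Type} {R : numDomainType} (w : I -> R) : Prop :=
  vpos (fun i => - w i).

Definition cornucopia {X Rn : finType} (sm sp : X -> Rn -> nat) {R : numDomainType}
  (v : Rn -> R) : Prop := vpos v /\ vpos (stoich_apply sm sp v).

Definition abyss {X Rn : finType} (sm sp : X -> Rn -> nat) {R : numDomainType}
  (v : Rn -> R) : Prop := vpos v /\ vneg (stoich_apply sm sp v).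

(* Main.v *)
Require Import Defs.
From mathcomp Require Import all_boot all_order all_algebra.
Import Order.TTheory GRing.Theory Num.Theory.
Local Open Scope ring_scope.

Lemma stoich_apply_eqfun (R : realFieldType) (X Rn : finType)
  (sm sp : X -> Rn -> nat) (v w : Rn -> R) :
  v =1 w -> stoich_apply sm sp v =1 stoich_apply sm sp w.
Proof. by move=> e x; rewrite /stoich_apply; apply: eq_bigr => r _; rewrite e. Qed.

Theorem proposition6 (R : realFieldType) (X Rn : finType)
  (sm sp : X -> Rn -> nat)
  (hX : (0 < #|X|)%N) (hRn : (0 < #|Rn|)%N)
  (hclosed : closed_RN sm sp) (hrev : reversible_RN sm sp) :
  ((forall v : Rn -> R, ~ cornucopia sm sp v) /\
   (forall v : Rn -> R, ~ abyss sm sp v))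
  <-> ~ (exists v : Rn -> R, vpos (stoich_apply sm sp v)).
Proof.
split.
- move=> [nc na] [v hv].
  pose f r := odflt r [pick rb | [forall x, (sm x rb == sp x r) && (sp x rb == sm x r)]].
  have hf : forall x r, stoich sm sp x (f r) = - stoich sm sp x r :> R.
    move=> x r; rewrite /f; case: pickP => [rb /= /forallP H|H].
      by move: (H x) => /andP[/eqP E1 /eqP E2]; rewrite /stoich E1 E2 opprB.
    exfalso; have [rb Hrb] := hrev r; move: (H rb) => /negP; apply.
    by apply/forallP => y; have [-> ->] := Hrb y; rewrite !eqxx.
  pose p r := if 0 <= v r then v r else 0.
  pose n r := if 0 <= v r then 0 else - v r.
  have hp : forall r, 0 <= p r by move=> r; rewrite /p; case: ifP.
  have hn : forall r, 0 <= n r.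
    by move=> r; rewrite /n; case: ifPn => // ; rewrite -ltNge => /ltW; rewrite oppr_ge0.
  have hpn : forall r, v r = p r - n r.
    by move=> r; rewrite /p /n; case: ifP => _; rewrite ?subr0 ?sub0r ?opprK.
  pose w r := p r + \sum_(r0 | f r0 == r) n r0.
  have hw : forall x, stoich_apply sm sp w x = stoich_apply sm sp v x.
    move=> x; rewrite /stoich_apply /w.
    under eq_bigr do rewrite mulrDr mulr_sumr.
    rewrite big_split /=.
    have -> : \sum_(i : Rn) \sum_(r0 | f r0 == i) stoich sm sp x i * n r0
            = \sum_(r0 : Rn) stoich sm sp x (f r0) * n r0.
      symmetry; rewrite (partition_big f predT) //=.
      by apply: eq_bigr => i _; apply: eq_bigr => r0 /eqP ->.
    under [X in _ + X]eq_bigr do rewrite hf mulNr.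
    rewrite sumrN -sumrB; apply: eq_bigr => r _; by rewrite hpn mulrBr.
  apply: (nc w); split; last first.
    by case: hv => h1 [x hx]; split; [move=> y; rewrite hw|exists x; rewrite hw].
  split; first by move=> r; rewrite /w addr_ge0 // sumr_ge0.
  case: (boolP [exists i, w i != 0]) => [/existsP//|/existsPn H].
  exfalso; case: hv => _ [x]; rewrite -hw /stoich_apply big1 ?eqxx // => r _.
  by move: (H r); rewrite negbK => /eqP ->; rewrite mulr0.
- move=> H; split=> v [hv hs]; apply: H.
  + by exists v.
  + exists (fun r => - v r); move: hs; rewrite /vneg /vpos.
    suff e : forall x, stoich_apply sm sp (fun r => - v r) x = - stoich_apply sm sp v x.
      by move=> [h1 [x hx]]; split; [move=> y; rewrite e|exists x; rewrite e].
    by move=> x; rewrite /stoich_apply -sumrN; apply: eq_bigr => r _; rewrite mulrN.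
Qed.
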